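(* Let $\mathcal G$ be a constructor GRS over a finite signature $\mathcal F$ and let $G\in\mathcal{TG}_{\mathrm{nrm}}(\mathcal F)$. (1) If $(H,l,r)\in\mathcal G$ and $\varphi:H{\restriction}l\to G$ is a homomorphism, then every path in $G$ from $\rho_G$ to $\varphi(l)$ is a safe path. (2) If moreover $\mathcal G$ is precedence terminating with argument separation and $G\to_{\mathcal G}H'$, then $H'\in\mathcal{TG}_{\mathrm{nrm}}(\mathcal F)$.
   Context: Term graphs. $\mathcal F=\mathcal C\cup\mathcal D$ is a finite signature (constructors and defined symbols, disjoint) with arity function $\mathrm{ar}$. A labeled graph consists of a finite acyclic directed graph $(V_G,E_G)$, a partial labeling $\mathrm{lab}_G:V_G\to\mathcal F$ and a successor function $\mathrm{att}_G:V_G\to V_G^*$ such that $\mathrm{att}_G(v)$ has length $\mathrm{ar}(\mathrm{lab}_G(v))$ if $v$ is labeled and is empty otherwise, and the set of entries of $\mathrm{att}_G(v)$ equals $\{u:(v,u)\in E_G\}$; the $j$-th entry is the $j$-th successor of $v$. Unlabeled nodes act as variables. A term graph additionally has a root $\rho_G$ from which every node is reachable; $\mathcal{TG}(\mathcal F)$ is the set of term graphs over $\mathcal F$ and $\mathcal{TG}(\mathcal C)$ those whose labeled nodes all carry constructors. $G{\restriction}v$ is the sub-term graph of nodes reachable from $v$, rooted at $v$; $H\subseteq G$ means $H=G{\restriction}v$ for some $v$. $G$ is closed if every node is labeled; basic if $\mathrm{lab}_G(\rho_G)\in\mathcal D$ and $G{\restriction}v\in\mathcal{TG}(\mathcal C)$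 for every successor $v$ of $\rho_G$. A path $\langle v_1,m_1,\dots,m_{k-1},v_k\rangle$ is a sequence of nodes where $v_{j+1}$ is the $m_j$-th successor of $v_j$. Argument separation. The argument positions of each $f\in\mathcal F$ are split into normal and safe ones, written $f(x_1,\dots,x_k;x_{k+1},\dots,x_{k+l})$; constructors have only safe positions; nodes with the same label have the same separation. For a labeled node $v$, $\mathrm{nrm}(v)$ (resp. $\mathrm{safe}(v)$) is the set of successors at normal (resp. safe) positions. $H\sqsubset_{\mathrm{nrm}}G$ means $H\subseteq G{\restriction}v$ for some $v\in\mathrm{nrm}(\rho_G)$. Rewriting. A homomorphism $\varphi$ from labeled graph $G$ to $H$ is a map $V_G\to V_H$ with $\mathrm{lab}_H(\varphi(v))=\mathrm{lab}_G(v)$ and $\mathrm{att}_H(\varphi(v))=\varphi(v_1),\dots,\varphi(v_k)$ whenever $v$ is labeled with $\mathrm{att}_G(v)=v_1,\dots,v_k$ (nothing is required at unlabeled nodes); it preserves the normal/safe split. A graph rewrite rule $(K,l,r)$ is a labeled graph $K$ with distinct nodes $l,r$ such that every unlabeled node of $K{\restriction}r$ lies in $K{\restriction}l$; it is a constructor rule if $K{\restriction}l$ is basic. A GRS is a (possibly infinite) set of rules; a constructor GRS consists of constructor rules. A redex in $G$ is a pair of a rule $(K,l,r)$ and a homomorphism $\varphi:K{\restriction}l\to G$; the rewrite step $G\to_{\mathcal G}H$ is the standard build/redirection/garbage-collection step: the labeled part of $K{\restriction}r$ not already in $K{\restriction}l$ is copied into $G$ (unlabeled nodes being mapped via $\varphi$),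 all edges into $\varphi(l)$ (and the root, if it is $\varphi(l)$) are redirected to the image of $r$, and nodes unreachable from the root are removed. Thus $H$ arises from $G$ by replacing $G{\restriction}\varphi(l)$ with an instance of $K{\restriction}r$. Precedence termination with argument separation. A precedence $\sqsubset$ is a well-founded strict partial order on $\mathcal F$ in which all constructors are minimal. For term graphs $H,G$ (sub-term graphs of a common graph), $H\sqsubset_{\mathrm{pt}}G$ holds if $\mathrm{lab}_H(v)\sqsubset\mathrm{lab}_G(\rho_G)$ for every labeled node $v$ of $H$ and additionally either (1) $H=G{\restriction}u$ or $H\sqsubset_{\mathrm{pt}}G{\restriction}u$ for some successor $u$ of $\rho_G$; or (2) $\rho_H$ is labeled, $H{\restriction}v\sqsubset_{\mathrm{nrm}}G$ for each $v\in\mathrm{nrm}(\rho_H)$, and $H{\restriction}v\sqsubset_{\mathrm{pt}}G$ for each $v\in\mathrm{safe}(\rho_H)$. A GRS $\mathcal G$ is precedence terminating with argument separation if for some argument separation and some precedence, $K{\restriction}r\sqsubset_{\mathrm{pt}}K{\restriction}l$ for every rule $(K,l,r)\in\mathcal G$. Safe paths and $\mathcal{TG}_{\mathrm{nrm}}$. A path $\langle v_1,m_1,\dots,v_k\rangle$ is safe if $v_{j+1}\in\mathrm{safe}(v_j)$ for all $j<k$ (the trivial path $\langle v\rangle$ is safe). $\mathcal{TG}_{\mathrm{nrm}}(\mathcal F)\subseteq\mathcal{TG}(\mathcal F)$ is defined inductively: $G\in\mathcal{TG}_{\mathrm{nrm}}(\mathcal F)$ if $G\in\mathcal{TG}(\mathcal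 C)$, or if $G{\restriction}v\in\mathcal{TG}(\mathcal C)$ for every $v\in\mathrm{nrm}(\rho_G)$ and $G{\restriction}v\in\mathcal{TG}_{\mathrm{nrm}}(\mathcal F)$ for every $v\in\mathrm{safe}(\rho_G)$. *)

(* Defs.v *)
From mathcomp Require Import all_boot.
From Stdlib Require Import ClassicalEpsilon.

Set Implicit Arguments.
Unset Strict Implicit.
Unset Printing Implicit Defensive.

(* A symbol f is a constructor iff [is_con f]; otherwise it is defined  *)
(* (so C and D are disjoint and cover F).  [is_nrm f j] says that the   *)
(* j-th argument position (0-based) of f is normal; otherwise safe.     *)
Record signature := Sig {
  sym : finType;
  ar : sym -> nat;
  is_con : sym -> bool;
  is_nrm : sym -> nat -> bool
}.

Record lgraph (S : signature) := LGraph {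
  gV : nat -> Prop;
  glab : nat -> option (sym S);
  gatt : nat -> seq nat
}.

Definition gedge S (G : lgraph S) (u w : nat) : Prop := gV G u /\ w \in gatt G u.

Inductive greach S (G : lgraph S) : nat -> nat -> Prop :=
| reach_refl v : greach G v v
| reach_step u w v : gedge G u w -> greach G w v -> greach G u v.

Definition wf_lgraph S (G : lgraph S) : Prop :=
  (forall v, gV G v ->
     match glab G v with
     | Some f => size (gatt G v) = ar f
     | None => gatt G v = [::]
     end)
  /\ (forall v w, gV G v -> w \in gatt G v -> gV G w)
  /\ (exists s : seq nat, forall v, gV G v -> v \in s)
  /\ (forall u w, gedge G u w -> ~ greach G w u).

Record tgraph (S : signature) := TGraph { tgr : lgraph S; troot : nat }.

Definition is_tg S (T : tgraph S) : Prop :=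
  wf_lgraph (tgr T) /\ gV (tgr T) (troot T)
  /\ (forall v, gV (tgr T) v -> greach (tgr T) (troot T) v).

Definition grestrict S (G : lgraph S) (v : nat) : tgraph S :=
  TGraph (LGraph (fun x => gV G x /\ greach G v x) (glab G) (gatt G)) v.

Definition subtg S (T : tgraph S) (v : nat) : tgraph S := grestrict (tgr T) v.

Definition inTGC S (T : tgraph S) : Prop :=
  is_tg T /\ (forall v f, gV (tgr T) v -> glab (tgr T) v = Some f -> is_con f).

Definition nrm_succ S (G : lgraph S) (v w : nat) : Prop :=
  exists f j, glab G v = Some f /\ j < size (gatt G v)
              /\ nth 0 (gatt G v) j = w /\ is_nrm f j.

Definition safe_succ S (G : lgraph S) (v w : nat) : Prop :=
  exists f j, glab G v = Some f /\ j < size (gatt G v)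
              /\ nth 0 (gatt G v) j = w /\ ~~ is_nrm f j.

Inductive TGnrm S : tgraph S -> Prop :=
| TGnrm_con T : inTGC T -> TGnrm T
| TGnrm_step T : is_tg T ->
    (forall v, nrm_succ (tgr T) (troot T) v -> inTGC (subtg T v)) ->
    (forall v, safe_succ (tgr T) (troot T) v -> TGnrm (subtg T v)) ->
    TGnrm T.

(* Paths <v1, m1, v2, ..., v_k>: start node v1 and list of (m_j, v_{j+1}); *)
(* positions m_j are 0-based.                                            *)
Fixpoint is_path S (G : lgraph S) (v : nat) (p : seq (nat * nat)) : Prop :=
  match p with
  | [::] => gV G v
  | (m, w) :: p' => gV G v /\ m < size (gatt G v) /\ nth 0 (gatt G v) m = w
                    /\ is_path G w p'
  end.

Definition path_end (v : nat) (p : seq (nat * nat)) : nat := last v (map snd p).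

Fixpoint safe_path S (G : lgraph S) (v : nat) (p : seq (nat * nat)) : Prop :=
  match p with
  | [::] => True
  | (m, w) :: p' => safe_succ G v w /\ safe_path G w p'
  end.

(* Homomorphisms between term graphs (no troot condition). *)
Definition ghom S (H G : tgraph S) (phi : nat -> nat) : Prop :=
  forall v, gV (tgr H) v ->
    gV (tgr G) (phi v) /\
    forall f, glab (tgr H) v = Some f ->
      glab (tgr G) (phi v) = Some f /\ gatt (tgr G) (phi v) = map phi (gatt (tgr H) v).

Record rule (S : signature) := Rule { rK : lgraph S; rl : nat; rr : nat }.

Definition wf_rule S (rho : rule S) : Prop :=
  let K := rK rho in
  wf_lgraph K /\ gV K (rl rho) /\ gV K (rr rho) /\ rl rho <> rr rho /\
  (forall v, greach K (rr rho) v -> glab K v = None -> greach K (rl rho) v).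

Definition basic S (T : tgraph S) : Prop :=
  exists f, glab (tgr T) (troot T) = Some f /\ ~~ is_con f /\
    forall w, w \in gatt (tgr T) (troot T) -> inTGC (subtg T w).

Definition constructor_rule S (rho : rule S) : Prop :=
  wf_rule rho /\ basic (grestrict (rK rho) (rl rho)).

Definition constructor_GRS S (R : rule S -> Prop) : Prop :=
  forall rho, R rho -> constructor_rule rho.

(* Rewrite grs_step.  N is a bound on the nodes of G; the copy of a node v  *)
(* of K|r \ K|l is the fresh node N + v.                                 *)
Definition pdec (P : Prop) : bool :=
  if excluded_middle_informative P then true else false.

Definition rewrite_res S (G : tgraph S) (rho : rule S) (phi : nat -> nat) (N : nat)
  : tgraph S :=
  let K := rK rho in
  let newnode v := pdec (greach K (rr rho) v /\ ~ greach K (rl rho) v) in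
  let m v := if newnode v then N + v else phi v in
  let V1 x := if N <= x then newnode (x - N) : Prop else gV (tgr G) x in
  let lab1 x := if N <= x then (if newnode (x - N) then glab K (x - N) else None)
                else glab (tgr G) x in
  let att1 x := if N <= x then (if newnode (x - N) then map m (gatt K (x - N)) else [::])
                else gatt (tgr G) x in
  let red y := if y == phi (rl rho) then m (rr rho) else y in
  let att2 x := map red (att1 x) in
  grestrict (LGraph V1 lab1 att2) (red (troot G)).

Definition grs_step S (R : rule S -> Prop) (G H : tgraph S) : Prop :=
  exists rho phi N, R rho /\ ghom (grestrict (rK rho) (rl rho)) G phi /\
    (forall x, gV (tgr G) x -> x < N) /\ H = rewrite_res G rho phi N.

Definition is_precedence S (p : rel (sym S)) : Prop :=
  irreflexive p /\ transitive p /\ well_founded (fun a b => p a b) /\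
  (forall c f, is_con c -> ~~ p f c).

Definition all_below S (p : rel (sym S)) (K : lgraph S) (a : nat) (f : sym S) : Prop :=
  forall w g, greach K a w -> gV K w -> glab K w = Some g -> p g f.

Definition nrm_lt S (K : lgraph S) (a b : nat) : Prop :=
  exists w, nrm_succ K b w /\ greach K w a.

(* pt p K a b  :=  (K|a) ⊏_pt (K|b), sub-term graphs of the common graph K *)
Inductive pt S (p : rel (sym S)) (K : lgraph S) : nat -> nat -> Prop :=
| pt_sub a b f u : glab K b = Some f -> all_below p K a f -> u \in gatt K b ->
    (a = u \/ pt p K a u) -> pt p K a b
| pt_arg a b f g : glab K b = Some f -> all_below p K a f -> glab K a = Some g ->
    (forall v, nrm_succ K a v -> nrm_lt K v b) ->
    (forall v, safe_succ K a v -> pt p K v b) -> pt p K a b.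

Definition PT_sep S (R : rule S -> Prop) : Prop :=
  exists p : rel (sym S), is_precedence p /\
    forall rho, R rho -> pt p (rK rho) (rr rho) (rl rho).

(* Main.v *)
Require Import Defs.
From mathcomp Require Import all_boot zify.
From Stdlib Require Import Classical FunctionalExtensionality PropExtensionality ClassicalEpsilon.

Set Implicit Arguments.
Unset Strict Implicit.
Unset Printing Implicit Defensive.

Lemma pdecP (P : Prop) : reflect P (pdec P).
Proof. rewrite /pdec; case: excluded_middle_informative => H; by constructor. Qed.

Lemma greach_trans S (L : lgraph S) a b c : greach L a b -> greach L b c -> greach L a c.
Proof. elim=> // u w v E _ IH H; exact: reach_step E (IH H). Qed.

Lemma greach_edge S (L : lgraph S) a b : gedge L a b -> greach L a b.
Proof. move=> E; exact: reach_step E (reach_refl _ _). Qed.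

Lemma greach_case S (L : lgraph S) a b : greach L a b ->
  a = b \/ exists w, gedge L a w /\ greach L w b.
Proof. case; [by left | move=> u w v E H; right; by exists w]. Qed.

Lemma reach_gV S (L : lgraph S) a b : wf_lgraph L -> gV L a -> greach L a b -> gV L b.
Proof.
move=> [_ [Hc _]] Ha H; elim: H Ha => // u w v [Hu Hw] _ IH _; apply: IH; exact: Hc Hw.
Qed.

Lemma restr_reach1 S (L : lgraph S) v a b :
  greach (tgr (grestrict L v)) a b -> greach L a b.
Proof. elim=> [x|u w x [[Hu _] Hw] _ IH]; [exact: reach_refl | exact: reach_step IH]. Qed.

Lemma restr_reach2 S (L : lgraph S) v a b :
  greach L v a -> greach L a b -> greach (tgr (grestrict L v)) a b.
Proof.
move=> Hva H; elim: H Hva => [x|u w x [Hu Hw] _ IH] Hv; first exact: reach_refl.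
apply: (@reach_step _ _ u w); first by [].
apply: IH; apply: greach_trans Hv _; exact: greach_edge.
Qed.

Lemma wf_restr S (L : lgraph S) v : wf_lgraph L -> wf_lgraph (tgr (grestrict L v)).
Proof.
move=> [Ha [Hc [[s Hs] Hac]]]; split; [|split; [|split]].
- move=> x [Hx _]; exact: Ha.
- move=> x w [Hx Hvx] Hw /=; split; first exact: Hc Hw.
  apply: greach_trans Hvx _; exact: greach_edge.
- exists s => x [Hx _]; exact: Hs.
- move=> u w [[Hu _] Hw] H; apply: (Hac u w) => //; exact: restr_reach1 H.
Qed.

Lemma is_tg_restr S (L : lgraph S) v : wf_lgraph L -> gV L v -> is_tg (grestrict L v).
Proof.
move=> W Hv; split; first exact: wf_restr.
split; first by split => //; exact: reach_refl.
move=> x [_ H] /=; exact: restr_reach2 (reach_refl _ _) H.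
Qed.

Lemma restr_restr S (L : lgraph S) x v : greach L x v ->
  grestrict (tgr (grestrict L x)) v = grestrict L v.
Proof.
move=> Hxv; rewrite /grestrict /=; congr TGraph; congr LGraph.
apply: functional_extensionality => y; apply: propositional_extensionality; split.
- move=> [[Hy _] H]; split => //; exact: restr_reach1 H.
- move=> [Hy H]; split; first by split => //; exact: greach_trans H.
  exact: restr_reach2.
Qed.

Definition CC S (L : lgraph S) v :=
  forall y f, gV L y -> greach L v y -> glab L y = Some f -> is_con f.

Lemma CC_mono S (L : lgraph S) a b : greach L a b -> CC L a -> CC L b.
Proof. move=> Hab H y f Hy Hby; apply: H Hy _; exact: greach_trans Hby. Qed.

Definition rank S (L : lgraph S) (s : seq nat) x := count (fun y => pdec (greach L x y)) s.

Lemma count_lt (T : eqType) (P Q : pred T) s x0 :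
  (forall y, P y -> Q y) -> x0 \in s -> Q x0 -> ~~ P x0 -> count P s < count Q s.
Proof.
move=> PQ; elim: s => // a s IH; rewrite inE /= => /orP [/eqP <-|Hs] Hq Hp.
  rewrite (negbTE Hp) Hq add0n add1n ltnS; exact: sub_count.
apply: leq_ltn_trans (leq_add (_ : P a <= Q a) (leqnn _)) _.
  by case: (P a) (PQ a) => //= ->.
by rewrite ltn_add2l IH.
Qed.

Lemma rank_lt S (L : lgraph S) s x z : wf_lgraph L -> (forall y, gV L y -> y \in s) ->
  gedge L x z -> rank L s z < rank L s x.
Proof.
move=> [_ [_ [_ Hac]]] Hs E; apply: (@count_lt _ _ _ _ x).
- move=> y /pdecP H; apply/pdecP; apply: greach_trans H; exact: greach_edge.
- by apply: Hs; case: E.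
- apply/pdecP; exact: reach_refl.
- by apply/pdecP; apply: Hac.
Qed.

Lemma rank_le S (L : lgraph S) s x : rank L s x <= size s.
Proof. exact: count_size. Qed.

Lemma TGnrm_inv S (L : lgraph S) (P : nat -> Prop) : wf_lgraph L ->
  (forall x, P x -> gV L x) ->
  (forall x v, P x -> nrm_succ L x v -> CC L v) ->
  (forall x v, P x -> safe_succ L x v -> P v) ->
  forall x, P x -> TGnrm (grestrict L x).
Proof.
move=> W PV Pn Ps.
have W' := W; case: W' => [_ [Hc [[s Hs] _]]].
suff: forall n x, rank L s x < n -> P x -> TGnrm (grestrict L x).
  by move=> H x; apply: (H (rank L s x).+1).
elim=> // n IH x Hr Px.
have Hx := PV x Px.
have Ed : forall j, j < size (gatt L x) -> gedge L x (nth 0 (gatt L x) j).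
  by move=> j Hj; split => //; exact: mem_nth.
apply: TGnrm_step; first exact: is_tg_restr.
- move=> v Hv; have Hv' : nrm_succ L x v by [].
  have E : gedge L x v by case: Hv' => [f [j [_ [Hj [<- _]]]]]; exact: Ed.
  rewrite /subtg restr_restr /=; last exact: greach_edge.
  split; first apply: is_tg_restr => //; first by case: E => _ Hw; exact: Hc Hw.
  move=> y f [Hy Hvy] Hl; exact: (Pn x v Px Hv' y f).
- move=> v Hv; have Hv' : safe_succ L x v by [].
  have E : gedge L x v by case: Hv' => [f [j [_ [Hj [<- _]]]]]; exact: Ed.
  rewrite /subtg restr_restr /=; last exact: greach_edge.
  apply: IH; last exact: Ps Hv'.
  by apply: leq_trans (rank_lt W Hs E) _.
Qed.

Lemma succ_kind S (L : lgraph S) x w : wf_lgraph L -> gV L x -> w \in gatt L x ->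
  nrm_succ L x w \/ safe_succ L x w.
Proof.
move=> [Ha _] Hx Hw; have := Ha x Hx.
case E: (glab L x) => [h|] Hs; last by rewrite Hs in Hw.
have Hj : index w (gatt L x) < size (gatt L x) by rewrite index_mem.
have Hn := nth_index 0 Hw.
case N: (is_nrm h (index w (gatt L x))).
  left; exists h, (index w (gatt L x)); by rewrite N.
right; exists h, (index w (gatt L x)); by rewrite N.
Qed.

Lemma TGnrm_CC S (T : tgraph S) : TGnrm T -> forall y z,
  greach (tgr T) (troot T) y -> nrm_succ (tgr T) y z -> CC (tgr T) z.
Proof.
elim=> {T} [T [_ Hc]|T Htg Hn Hs IH] y z Hy Hz.
  move=> y' f Hy' _; exact: Hc.
have W := Htg.1.
have Hyz : gedge (tgr T) y z.
  split; first exact: reach_gV W Htg.2.1 Hy.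
  by case: Hz => f [j [_ [Hj [<- _]]]]; exact: mem_nth.
case: (greach_case Hy) => [Ey|[w [Ew Hwy]]].
  subst y; have [_ HC] := Hn z Hz.
  move=> y' f Hy' Hr; apply: HC; by split.
have Hwz : greach (tgr T) w z by apply: greach_trans Hwy (greach_edge Hyz).
case: (succ_kind W Htg.2.1 Ew.2) => Hk.
  have [_ HC] := Hn w Hk; move=> y' f Hy' Hr; apply: HC.
  split => //; exact: greach_trans Hwz Hr.
have := IH w Hk y z (restr_reach2 (reach_refl _ _) Hwy) Hz.
move=> HC y' f Hy' Hr; apply: HC => //.
  split => //; exact: greach_trans Hwz Hr.
exact: restr_reach2.
Qed.

Lemma TGnrm_tg S (T : tgraph S) : TGnrm T -> is_tg T.
Proof. by case=> // T' []. Qed.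

Lemma TGnrm_CC_all S (T : tgraph S) : TGnrm T -> forall y z,
  gV (tgr T) y -> nrm_succ (tgr T) y z -> CC (tgr T) z.
Proof.
move=> H y z Hy; apply: (TGnrm_CC H); exact: (TGnrm_tg H).2.2 y Hy.
Qed.

Lemma path_reach S (L : lgraph S) v p : is_path L v p ->
  gV L (path_end v p) /\ greach L v (path_end v p).
Proof.
elim: p v => [|[m w] p IH] v /=; first by move=> H; split => //; exact: reach_refl.
move=> [Hv [Hm [Hw Hp]]]; have [H1 H2] := IH w Hp.
rewrite /path_end /= in H1 H2 *; split => //.
apply: reach_step H2; split => //; rewrite -Hw; exact: mem_nth.
Qed.

Lemma path_safe S (L : lgraph S) : wf_lgraph L ->
  (forall y z, gV L y -> nrm_succ L y z -> CC L z) ->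
  forall p y f, is_path L y p -> glab L (path_end y p) = Some f -> ~~ is_con f ->
  safe_path L y p.
Proof.
move=> [Ha _] HC; elim=> [//|[m w] p IH] y f /= [Hy [Hm [Hw Hp]]] Hl Hf.
rewrite /path_end /= in Hl; split; last exact: IH Hp Hl Hf.
have := Ha y Hy; case E: (glab L y) => [h|] Hs; last by rewrite Hs in Hm.
case N: (is_nrm h m); last by exists h, m; rewrite N.
have [H1 H2] := path_reach Hp.
have Hn : nrm_succ L y w by exists h, m; rewrite N.
by have := HC y w Hy Hn (path_end w p) f H1 H2 Hl; rewrite (negbTE Hf).
Qed.

Lemma hom_edge S (K : lgraph S) l (G : tgraph S) phi : wf_lgraph K ->
  ghom (grestrict K l) G phi -> forall a w, gedge K a w -> greach K l a ->
  gedge (tgr G) (phi a) (phi w).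
Proof.
move=> [Ha _] Hh a w [Hav Hw] Hla.
have [HG Hf] := Hh a (conj Hav Hla).
have := Ha a Hav; case E: (glab K a) => [f|] Hs; last by rewrite Hs in Hw.
have [_ Ea] := Hf f E; rewrite /gedge Ea; split => //; exact: map_f.
Qed.

Lemma hom_reach S (K : lgraph S) l (G : tgraph S) phi : wf_lgraph K ->
  ghom (grestrict K l) G phi -> forall a b, greach K a b -> greach K l a ->
  greach (tgr G) (phi a) (phi b).
Proof.
move=> W Hh a b H; elim: H => [x|u w x E _ IH] Hl; first exact: reach_refl.
apply: reach_step (hom_edge W Hh E Hl) (IH _).
apply: greach_trans Hl (greach_edge E).
Qed.

Lemma hom_back S (K : lgraph S) l (G : tgraph S) phi : wf_lgraph K -> is_tg G ->
  ghom (grestrict K l) G phi -> forall k, greach K l k -> k <> l ->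
  ~ greach (tgr G) (phi k) (phi l).
Proof.
move=> W Htg Hh k Hk Hne.
case: (greach_case Hk) => [E|[c [Ec Hck]]]; first by rewrite E in Hne.
have E := hom_edge W Hh Ec (reach_refl _ _).
have R := hom_reach W Hh Hck (greach_edge Ec).
move=> Hb; apply: (Htg.1.2.2.2 _ _ E); exact: greach_trans R Hb.
Qed.

Lemma pdecT (P : Prop) : P -> pdec P = true.
Proof. by move=> H; apply/pdecP. Qed.
Lemma pdecF (P : Prop) : ~ P -> pdec P = false.
Proof. by move=> H; apply/negbTE/pdecP. Qed.

Definition nn S (rho : rule S) (v : nat) : bool :=
  pdec (greach (rK rho) (rr rho) v /\ ~ greach (rK rho) (rl rho) v).
Definition mm S (rho : rule S) (phi : nat -> nat) N v := if nn rho v then N + v else phi v.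
Definition V1 S (G : tgraph S) (rho : rule S) N (x : nat) : Prop :=
  if N <= x then (nn rho (x - N) : Prop) else gV (tgr G) x.
Definition lab1 S (G : tgraph S) (rho : rule S) N x :=
  if N <= x then (if nn rho (x - N) then glab (rK rho) (x - N) else None)
  else glab (tgr G) x.
Definition att1 S (G : tgraph S) (rho : rule S) phi N x :=
  if N <= x then (if nn rho (x - N) then map (mm rho phi N) (gatt (rK rho) (x - N)) else [::])
  else gatt (tgr G) x.
Definition red S (rho : rule S) phi N y := if y == phi (rl rho) then mm rho phi N (rr rho) else y.
Definition Lg S (G : tgraph S) (rho : rule S) phi N :=
  LGraph (V1 G rho N) (lab1 G rho N) (fun x => map (red rho phi N) (att1 G rho phi N x)).

Lemma rewrite_resE S (G : tgraph S) rho phi N :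
  rewrite_res G rho phi N = grestrict (Lg G rho phi N) (red rho phi N (troot G)).
Proof. reflexivity. Qed.

Lemma pt_head S p (K : lgraph S) a b : pt p K a b ->
  exists f, glab K b = Some f /\ all_below p K a f.
Proof. by case=> a' b' f *; exists f. Qed.

Lemma pt_noreach S p (K : lgraph S) a b : irreflexive p -> gV K b -> pt p K a b ->
  ~ greach K a b.
Proof.
move=> Ir Hb /pt_head [f [Hf Hab]] H; have := Hab b f H Hb Hf; by rewrite Ir.
Qed.

Lemma pt_inv S p (K : lgraph S) a b : pt p K a b ->
  (exists f u, glab K b = Some f /\ u \in gatt K b /\ (a = u \/ pt p K a u)) \/
  (exists f g, glab K b = Some f /\ glab K a = Some g /\
     (forall v, nrm_succ K a v -> nrm_lt K v b) /\
     (forall v, safe_succ K a v -> pt p K v b)).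
Proof.
case=> [a' b' f u Hf _ Hu H|a' b' f g Hf _ Hg Hn Hs].
  left; by exists f, u.
right; by exists f, g.
Qed.

Lemma part2 S (G : tgraph S) (rho : rule S) phi N p :
  constructor_rule rho -> is_precedence p -> pt p (rK rho) (rr rho) (rl rho) ->
  TGnrm G -> ghom (grestrict (rK rho) (rl rho)) G phi ->
  (forall x, gV (tgr G) x -> x < N) -> TGnrm (rewrite_res G rho phi N).
Proof.
move=> [[WK [HlV [HrV [Hlr Hunl]]]] [fl [Hfl [Hflc Hsucc]]]] Hprec Hpt HG Hh HN.
have Htg := TGnrm_tg HG; have WG := Htg.1.
have HCG := TGnrm_CC_all HG.
have [HphilV Hphill] : gV (tgr G) (phi (rl rho)) /\ glab (tgr G) (phi (rl rho)) = Some fl.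
  have [H1 H2] := Hh (rl rho) (conj HlV (reach_refl _ _)); split => //; exact: (H2 fl Hfl).1.
have philN := HN _ HphilV.
have CCex : forall z, CC (tgr G) z -> ~ greach (tgr G) z (phi (rl rho)).
  move=> z Hz H; have := Hz _ fl HphilV H Hphill; by rewrite (negbTE Hflc).
have Hnrl : ~ greach (rK rho) (rr rho) (rl rho) by apply: pt_noreach Hpt => //; case: Hprec.
have phi_in : forall k, greach (rK rho) (rl rho) k -> gV (tgr G) (phi k).
  move=> k Hk; exact: (Hh k (conj (reach_gV WK HlV Hk) Hk)).1.
have nnT : forall u, nn rho u -> greach (rK rho) (rr rho) u /\ ~ greach (rK rho) (rl rho) u.
  by move=> u /pdecP.
have nnF : forall u, ~~ nn rho u -> greach (rK rho) (rr rho) u -> greach (rK rho) (rl rho) u.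
  move=> u /pdecP H Hr; apply: NNPP => Hl; exact: H.
have neq : forall k, greach (rK rho) (rl rho) k -> greach (rK rho) (rr rho) k ->
    phi k <> phi (rl rho) /\ ~ greach (tgr G) (phi k) (phi (rl rho)).
  move=> k Hl Hr; have Hk : k <> rl rho by move=> E; apply: Hnrl; rewrite -E.
  have H := hom_back WK Htg Hh Hl Hk; split => // E; apply: H; rewrite E; exact: reach_refl.
have mmN : forall u, nn rho u -> mm rho phi N u = N + u by move=> u H; rewrite /mm H.
have mmO : forall u, ~~ nn rho u -> mm rho phi N u = phi u by move=> u H; rewrite /mm (negbTE H).
have redI : forall y, y <> phi (rl rho) -> red rho phi N y = y.
  by move=> y H; rewrite /red; case: eqP.
have redN : forall u, red rho phi N (N + u) = N + u.
  move=> u; apply: redI => E; move: philN; rewrite -E; lia.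
have redP : red rho phi N (phi (rl rho)) = mm rho phi N (rr rho) by rewrite /red eqxx.
have Hmr : (nn rho (rr rho) /\ mm rho phi N (rr rho) = N + rr rho) \/
    (~~ nn rho (rr rho) /\ mm rho phi N (rr rho) = phi (rr rho) /\
     phi (rr rho) <> phi (rl rho) /\ ~ greach (tgr G) (phi (rr rho)) (phi (rl rho)) /\
     gV (tgr G) (phi (rr rho))).
  case E: (nn rho (rr rho)); [left; split => //; exact: mmN | right].
  have E' : ~~ nn rho (rr rho) by rewrite E.
  have Hl := nnF _ E' (reach_refl _ _).
  have [n1 n2] := neq _ Hl (reach_refl _ _).
  split => //; split; first exact: mmO.
  split => //; split => //; exact: phi_in.
have Lold : forall x, x < N -> (V1 G rho N x = gV (tgr G) x) /\ lab1 G rho N x = glab (tgr G) x /\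
    map (red rho phi N) (att1 G rho phi N x) = map (red rho phi N) (gatt (tgr G) x).
  by move=> x Hx; rewrite /V1 /lab1 /att1 leqNgt Hx.
have Lnew : forall u, nn rho u -> V1 G rho N (N + u) /\ lab1 G rho N (N + u) = glab (rK rho) u /\
    map (red rho phi N) (att1 G rho phi N (N + u)) =
    map (red rho phi N) (map (mm rho phi N) (gatt (rK rho) u)).
  by move=> u H; rewrite /V1 /lab1 /att1 leq_addr addKn H.
have Lsplit : forall x, V1 G rho N x -> (x < N /\ gV (tgr G) x) \/
    (exists u, x = N + u /\ nn rho u).
  move=> x; rewrite /V1; case: (leqP N x) => Hx H; last by left.
  right; exists (x - N); split => //; lia.
have nngV : forall u, nn rho u -> gV (rK rho) u.
  move=> u /nnT [H _]; exact: reach_gV WK HrV H.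
have V1mm : forall k, greach (rK rho) (rr rho) k -> V1 G rho N (mm rho phi N k).
  move=> k Hk; case E: (nn rho k).
    by rewrite (mmN _ E); case: (Lnew _ E).
  have E' : ~~ nn rho k by rewrite E.
  have Hp := phi_in _ (nnF _ E' Hk).
  by rewrite (mmO _ E') (Lold _ (HN _ Hp)).1.
have V1red : forall y, V1 G rho N y -> V1 G rho N (red rho phi N y).
  move=> y Hy; rewrite /red; case: eqP => // _; exact: V1mm (reach_refl _ _).
have [sG HsG] := WG.2.2.1; have [sK HsK] := WK.2.2.1.
have WL : wf_lgraph (Lg G rho phi N).
  split; [|split; [|split]].
  - move=> v Hv; rewrite /Lg /=.
    case: (Lsplit v Hv) => [[Hx HvG]|[u [-> Hu]]].
      have [_ [-> ->]] := Lold v Hx; have := WG.1 v HvG.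
      by case: glab => [f|] H; rewrite ?size_map // H.
    have [_ [-> ->]] := Lnew u Hu; have := WK.1 u (nngV u Hu).
    by case: glab => [f|] H; rewrite ?size_map // H.
  - move=> v w Hv Hw; change (is_true (w \in map (red rho phi N) (att1 G rho phi N v))) in Hw.
    change (V1 G rho N w).
    case: (Lsplit v Hv) => [[Hx HvG]|[u [Ev Hu]]].
      rewrite (Lold v Hx).2.2 in Hw; move/mapP: Hw => [z Hz ->]; apply: V1red.
      have HzG : gV (tgr G) z by exact: WG.2.1 v z HvG Hz.
      by rewrite (Lold z (HN _ HzG)).1.
    subst v; rewrite (Lnew u Hu).2.2 in Hw; move/mapP: Hw => [y /mapP [k Hk ->] ->].
    apply: V1red; apply: V1mm; apply: greach_trans (nnT u Hu).1 _.
    apply: greach_edge; split => //; exact: nngV.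
  - exists (iota 0 N ++ map (addn N) sK) => v Hv; rewrite mem_cat.
    case: (Lsplit v Hv) => [[Hx _]|[u [-> Hu]]]; first by rewrite mem_iota; apply/orP; left; lia.
    apply/orP; right; apply: map_f; apply: HsK; exact: nngV.
  - pose B := (size sG).+1; pose BK := (size sK).+1.
    pose rkL x := if N <= x then B + rank (rK rho) sK (x - N)
      else if pdec (greach (tgr G) x (phi (rl rho))) then B + BK + rank (tgr G) sG x
      else rank (tgr G) sG x.
    have rkE : forall x y, gedge (Lg G rho phi N) x y -> rkL y < rkL x.
      move=> x y [Hx Hy]; change (is_true (y \in map (red rho phi N) (att1 G rho phi N x))) in Hy.
      case: (Lsplit x Hx) => [[HxN HxG]|[u [Ex Hu]]].
        rewrite (Lold x HxN).2.2 in Hy; move/mapP: Hy => [z Hz ->].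
        have Ez : gedge (tgr G) x z by split.
        have HzG : gV (tgr G) z by exact: WG.2.1 x z HxG Hz.
        have rlt := rank_lt WG HsG Ez.
        have rx : rkL x = if pdec (greach (tgr G) x (phi (rl rho))) then B + BK + rank (tgr G) sG x
          else rank (tgr G) sG x by rewrite /rkL (leqNgt N) HxN.
        case: (eqVneq z (phi (rl rho))) => [Ez'|Hne].
          subst z; rewrite redP rx pdecT; last exact: greach_edge.
          case: Hmr => [[_ ->]|[_ [-> [_ [Hnb HV]]]]].
            rewrite /rkL leq_addr addKn; have := rank_le (rK rho) sK (rr rho); lia.
          rewrite /rkL (leqNgt N) (HN _ HV) /= pdecF //; have := rank_le (tgr G) sG (phi (rr rho)); lia.
        rewrite redI; last by apply/eqP.
        have ry : rkL z = if pdec (greach (tgr G) z (phi (rl rho))) then B + BK + rank (tgr G) sG z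
          else rank (tgr G) sG z by rewrite /rkL (leqNgt N) (HN _ HzG).
        rewrite rx ry; case Az: (pdec (greach (tgr G) z (phi (rl rho)))).
          move: (Az) => /pdecP HAz; rewrite pdecT; first lia.
          exact: greach_trans (greach_edge Ez) HAz.
        have := rank_le (tgr G) sG z; case: pdec; lia.
      subst x; rewrite (Lnew u Hu).2.2 in Hy; move/mapP: Hy => [y' /mapP [k Hk ->] ->].
      have EK : gedge (rK rho) u k by split => //; exact: nngV.
      have Hrk : greach (rK rho) (rr rho) k by apply: greach_trans (nnT u Hu).1 (greach_edge EK).
      case E: (nn rho k).
        rewrite (mmN _ E) redN /rkL !leq_addr !addKn.
        have := rank_lt WK HsK EK; lia.
      have E' : ~~ nn rho k by rewrite E.
      have Hlk := nnF _ E' Hrk; have [n1 n2] := neq _ Hlk Hrk.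
      rewrite (mmO _ E') redI //.
      rewrite /rkL leq_addr addKn (leqNgt N) (HN _ (phi_in _ Hlk)) /= pdecF //.
      have := rank_le (tgr G) sG (phi k); lia.
    have rkR : forall a b, greach (Lg G rho phi N) a b -> rkL b <= rkL a.
      move=> a b; elim => // u w v E _ IH; have := rkE _ _ E; lia.
    move=> u w E H; have := rkE _ _ E; have := rkR _ _ H; lia.
have CCL : forall z, gV (tgr G) z -> CC (tgr G) z -> CC (Lg G rho phi N) z.
  move=> z Hz0 Hz.
  have aux : forall a y, greach (Lg G rho phi N) a y -> a < N -> gV (tgr G) a ->
      greach (tgr G) z a -> y < N /\ gV (tgr G) y /\ greach (tgr G) z y.
    move=> a y H; elim: H => [x|u w x [Hu Hw] _ IH] Ha HaG Hza; first by [].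
    change (is_true (w \in map (red rho phi N) (att1 G rho phi N u))) in Hw.
    rewrite (Lold u Ha).2.2 in Hw; move/mapP: Hw => [c Hc Ew].
    have Ec : gedge (tgr G) u c by split.
    have Hzc : greach (tgr G) z c by apply: greach_trans Hza (greach_edge Ec).
    have Hne : c <> phi (rl rho) by move=> E; apply: (CCex z Hz); rewrite -E.
    rewrite redI // in Ew; subst w; have HcG : gV (tgr G) c by exact: WG.2.1 u c HaG Hc.
    exact: IH (HN _ HcG) HcG Hzc.
  move=> y f Hy Hzy Hl.
  have [yN [yG zy]] := aux z y Hzy (HN z Hz0) Hz0 (reach_refl _ _).
  change (lab1 G rho N y = Some f) in Hl; rewrite (Lold y yN).2.1 in Hl.
  exact: Hz y f yG zy Hl.
pose Inv x := (x < N /\ gV (tgr G) x /\ x <> phi (rl rho)) \/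
  (exists u, x = N + u /\ nn rho u /\ pt p (rK rho) u (rl rho)).
have InvRed : forall z, gV (tgr G) z -> Inv (red rho phi N z).
  move=> z Hz; case: (eqVneq z (phi (rl rho))) => [E|Hne].
    subst z; rewrite redP; case: Hmr => [[Hn ->]|[_ [-> [n1 [_ HV]]]]].
      by right; exists (rr rho).
    by left; split; [exact: HN | split].
  rewrite redI; last by apply/eqP.
  by left; split; [exact: HN | split => //; apply/eqP].
have ptA : forall u f, nn rho u -> pt p (rK rho) u (rl rho) -> glab (rK rho) u = Some f ->
    (forall v, nrm_succ (rK rho) u v -> nrm_lt (rK rho) v (rl rho)) /\
    (forall v, safe_succ (rK rho) u v -> pt p (rK rho) v (rl rho)).
  move=> u f Hu Hpu Hl.
  case: (pt_inv Hpu) => [[f0 [u' [Hf0 [Hu' [Eu|Hpt']]]]]|[f0 [g [_ [_ [H1 H2]]]]]]; last by [].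
    exfalso; apply: (nnT u Hu).2; rewrite Eu; apply: greach_edge; by split.
  have [f' [Hf' Hab]] := pt_head Hpt'.
  have pgf := Hab u f (reach_refl _ _) (nngV u Hu) Hl.
  have [_ Hc] := Hsucc u' Hu'.
  have con : is_con f'.
    apply: (Hc u' f') => //; split; last exact: reach_refl.
    split; [exact: WK.2.1 _ _ HlV Hu' | exact: greach_edge].
  have := Hprec.2.2.2 f' f con; by rewrite pgf.
rewrite rewrite_resE; apply: (@TGnrm_inv _ _ Inv) => //.
- move=> x [[xN [xG _]]|[u [-> [Hu _]]]].
    by change (V1 G rho N x); rewrite (Lold x xN).1.
  exact: (Lnew u Hu).1.
- move=> x v [[xN [xG xne]]|[u [-> [Hu Hpu]]]] [f [j [Hl [Hj [Hv Hn]]]]].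
    change (lab1 G rho N x = Some f) in Hl.
    change (is_true (j < size (map (red rho phi N) (att1 G rho phi N x)))) in Hj.
    change (nth 0 (map (red rho phi N) (att1 G rho phi N x)) j = v) in Hv.
    rewrite (Lold x xN).2.1 in Hl; rewrite (Lold x xN).2.2 in Hj Hv.
    rewrite size_map in Hj; rewrite (nth_map 0) // in Hv.
    have Hnz : nrm_succ (tgr G) x (nth 0 (gatt (tgr G) x) j) by exists f, j.
    have CCz := HCG _ _ xG Hnz.
    have zne : nth 0 (gatt (tgr G) x) j <> phi (rl rho).
      move=> E; apply: (CCex _ CCz); rewrite E; exact: reach_refl.
    rewrite -Hv redI //; apply: CCL => //; apply: WG.2.1 xG _; exact: mem_nth.
  change (lab1 G rho N (N + u) = Some f) in Hl.
  change (is_true (j < size (map (red rho phi N) (att1 G rho phi N (N + u))))) in Hj.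
  change (nth 0 (map (red rho phi N) (att1 G rho phi N (N + u))) j = v) in Hv.
  rewrite (Lnew u Hu).2.1 in Hl; rewrite (Lnew u Hu).2.2 in Hj Hv.
  rewrite !size_map in Hj; rewrite (nth_map 0) ?size_map // (nth_map 0) // in Hv.
  have [Hnr _] := ptA u f Hu Hpu Hl.
  have Hnk : nrm_succ (rK rho) u (nth 0 (gatt (rK rho) u) j) by exists f, j.
  have [w [Hlw Hwk]] := Hnr _ Hnk.
  case: (Hlw) => [f1 [j1 [Hl1 [Hj1 [Hw1 Hn1]]]]].
  have Elw : gedge (rK rho) (rl rho) w by split => //; rewrite -Hw1; exact: mem_nth.
  have Hlk := greach_trans (greach_edge Elw) Hwk.
  have Hnn : ~~ nn rho (nth 0 (gatt (rK rho) u) j).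
    by apply/negP => /nnT [_ H]; exact: H Hlk.
  have [_ Hhl] := Hh (rl rho) (conj HlV (reach_refl _ _)).
  have [Hg1 Ha1] := Hhl f1 Hl1.
  have Hnw : nrm_succ (tgr G) (phi (rl rho)) (phi w).
    exists f1, j1; rewrite Ha1 size_map (nth_map 0) // Hw1; by split.
  have CCw := HCG _ _ HphilV Hnw.
  have CCk := CC_mono (hom_reach WK Hh Hwk (greach_edge Elw)) CCw.
  have kne : phi (nth 0 (gatt (rK rho) u) j) <> phi (rl rho).
    move=> E; apply: (CCex _ CCk); rewrite E; exact: reach_refl.
  rewrite -Hv (mmO _ Hnn) redI //; apply: CCL => //; exact: phi_in.
- move=> x v [[xN [xG xne]]|[u [-> [Hu Hpu]]]] [f [j [Hl [Hj [Hv Hn]]]]].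
    change (lab1 G rho N x = Some f) in Hl.
    change (is_true (j < size (map (red rho phi N) (att1 G rho phi N x)))) in Hj.
    change (nth 0 (map (red rho phi N) (att1 G rho phi N x)) j = v) in Hv.
    rewrite (Lold x xN).2.1 in Hl; rewrite (Lold x xN).2.2 in Hj Hv.
    rewrite size_map in Hj; rewrite (nth_map 0) // in Hv.
    rewrite -Hv; apply: InvRed; apply: WG.2.1 xG _; exact: mem_nth.
  change (lab1 G rho N (N + u) = Some f) in Hl.
  change (is_true (j < size (map (red rho phi N) (att1 G rho phi N (N + u))))) in Hj.
  change (nth 0 (map (red rho phi N) (att1 G rho phi N (N + u))) j = v) in Hv.
  rewrite (Lnew u Hu).2.1 in Hl; rewrite (Lnew u Hu).2.2 in Hj Hv.
  rewrite !size_map in Hj; rewrite (nth_map 0) ?size_map // (nth_map 0) // in Hv.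
  have [_ Hsf] := ptA u f Hu Hpu Hl.
  set k := nth 0 (gatt (rK rho) u) j in Hv.
  have Hsk : safe_succ (rK rho) u k by exists f, j.
  have Hptk := Hsf k Hsk.
  have EK : gedge (rK rho) u k by split; [exact: nngV | exact: mem_nth].
  have Hrk : greach (rK rho) (rr rho) k by apply: greach_trans (nnT u Hu).1 (greach_edge EK).
  case E: (nn rho k).
    rewrite -Hv (mmN _ E) redN; right; by exists k.
  have E' : ~~ nn rho k by rewrite E.
  have Hlk := nnF _ E' Hrk; have [n1 n2] := neq _ Hlk Hrk.
  rewrite -Hv (mmO _ E') redI //; left; split; [exact: HN (phi_in _ Hlk)|split => //].
  exact: phi_in.
- exact: InvRed Htg.2.1.
Qed.

Theorem mainTheorem2 (S : signature)
  (sep_con : forall f j, is_con f -> j < ar f -> ~~ @is_nrm S f j)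
  (R : rule S -> Prop) (HR : constructor_GRS R)
  (G : tgraph S) (HG : TGnrm G) :
  (forall rho phi, R rho -> ghom (grestrict (rK rho) (rl rho)) G phi ->
     forall p, is_path (tgr G) (troot G) p ->
       path_end (troot G) p = phi (rl rho) ->
       safe_path (tgr G) (troot G) p)
  /\
  (PT_sep R -> forall H', grs_step R G H' -> TGnrm H').
Proof.
split.
- move=> rho phi Hr Hh p Hp Hend.
  have [[WK [HlV _]] [fl [Hfl [Hflc _]]]] := HR rho Hr.
  have [_ H2] := Hh (rl rho) (conj HlV (reach_refl _ _)).
  have [Hl _] := H2 fl Hfl.
  apply: (path_safe (TGnrm_tg HG).1 (TGnrm_CC_all HG)) Hp _ Hflc.
  by rewrite Hend.
- move=> [pr [Hprec Hpts]] H' [rho [phi [N [Hr [Hh [HN ->]]]]]].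
  exact: part2 (HR rho Hr) Hprec (Hpts rho Hr) HG Hh HN.
Qed.
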